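(* Let $C$ and $C'$ be Clifford systems on $\mathbb{R}^{2l}$ and $\mathbb{R}^{2l'}$ respectively, each satisfying ($l>m+1$ or $l=m\ge2$) for its own rank. If $C$ and $C'$ are not geometrically equivalent, then there is no isometry $\mathbb{S}^{2l-1}\to\mathbb{S}^{2l'-1}$ mapping the leaves of $\mathcal{F}_C$ onto the leaves of $\mathcal{F}_{C'}$.
   Context: A Clifford system $C$ of rank $m+1$ ($m\ge1$) on $\mathbb{R}^{2l}$, with the standard inner product, is an $(m+1)$-dimensional linear subspace $\mathbb{R}_C$ of the symmetric endomorphisms of $\mathbb{R}^{2l}$. It must admit a basis $P_0,\dots,P_m$ with $P_i^2=\mathrm{Id}$ and $P_iP_j=-P_jP_i$ for $i\ne j$. The map $\pi_C$ is $\pi_C(x)=\sum_i\langle P_ix,x\rangle P_i$ on $\mathbb{S}^{2l-1}$, and $\mathcal{F}_C$ is the partition of $\mathbb{S}^{2l-1}$ into fibers of $\pi_C$. Clifford systems $C,C'$ on the same $\mathbb{R}^{2l}$ are geometrically equivalent if $\mathbb{R}_{C'}=A^{-1}\mathbb{R}_CA$ for some $A\in O(2l)$; systems on spaces of different dimensions are never geometrically equivalent. *)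

(* Defs.v *)
From HB Require Import structures.
From mathcomp Require Import all_boot all_order all_algebra.
Set Implicit Arguments. Unset Strict Implicit. Unset Printing Implicit Defensive.
Import Order.TTheory GRing.Theory Num.Theory.
Local Open Scope ring_scope.

Section CliffordDefs.
Variable R : rcfType.

Definition dotv (n : nat) (x y : 'rV[R]_n) : R := (x *m y^T) 0 0.

Definition on_sphere (n : nat) (x : 'rV[R]_n) : Prop := dotv x x = 1.

(* A Clifford system of rank m+1 on R^n, given by an admissible basis
   P_0,...,P_m of symmetric endomorphisms with P_i^2 = Id and
   P_i P_j = - P_j P_i for i <> j. *)
Definition is_clifford_basis (n m : nat) (P : 'I_m.+1 -> 'M[R]_n) : Prop :=
  [/\ forall i, (P i)^T = P i,
      forall i, P i *m P i = 1%:M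
    & forall i j, i != j -> P i *m P j = - (P j *m P i)].

(* the linear subspace R_C spanned by the P_i, encoded (mxalgebra style)
   as the row space of the matrix whose rows are the vectorized P_i *)
Definition cliff_space (n m : nat) (P : 'I_m.+1 -> 'M[R]_n) : 'M[R]_(m.+1, n * n) :=
  \matrix_(i < m.+1) mxvec (P i).

Definition cliff_pi (n m : nat) (P : 'I_m.+1 -> 'M[R]_n) (x : 'rV[R]_n) : 'M[R]_n :=
  \sum_(i < m.+1) dotv (x *m P i) x *: P i.

Definition orthogonal_mx (n : nat) (A : 'M[R]_n) : Prop := A *m A^T = 1%:M.

(* geometric equivalence: same ambient space R^{2l} (l = l') and
   R_{C'} = A^{-1} R_C A for some A in O(2l).  Systems on spaces of
   different dimensions are never geometrically equivalent. *)
Definition geom_equiv (l m l' m' : nat)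
    (P : 'I_m.+1 -> 'M[R]_(l.*2)) (P' : 'I_m'.+1 -> 'M[R]_(l'.*2)) : Prop :=
  exists E : l.*2 = l'.*2,
  exists2 A : 'M[R]_(l'.*2), orthogonal_mx A &
    (cliff_space P' ==
     cliff_space (fun i => invmx A *m castmx (E, E) (P i) *m A))%MS.

(* isometry between unit spheres (for the Euclidean chordal distance, which
   has the same isometries as the intrinsic distance) *)
Definition sphere_isometry (n n' : nat) (f : 'rV[R]_n -> 'rV[R]_n') : Prop :=
  [/\ forall x, on_sphere x -> on_sphere (f x),
      forall x y, on_sphere x -> on_sphere y ->
        dotv (f x - f y) (f x - f y) = dotv (x - y) (x - y)
    & forall z, on_sphere z -> exists2 x, on_sphere x & f x = z].

(* f maps each leaf of F_C (fiber of pi_C through x) onto a leaf of F_C'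
   (namely the fiber of pi_C' through f x). *)
Definition maps_leaves_onto (n m n' m' : nat)
    (P : 'I_m.+1 -> 'M[R]_n) (P' : 'I_m'.+1 -> 'M[R]_n')
    (f : 'rV[R]_n -> 'rV[R]_n') : Prop :=
  forall x, on_sphere x ->
    forall z, (on_sphere z /\ cliff_pi P' z = cliff_pi P' (f x)) <->
              (exists2 y, (on_sphere y /\ cliff_pi P y = cliff_pi P x) & f y = z).

End CliffordDefs.

(* Main.v *)
Require Import Defs.
From HB Require Import structures.
From mathcomp Require Import all_boot all_order all_algebra.
From mathcomp Require Import ring lra zify.
Set Implicit Arguments. Unset Strict Implicit. Unset Printing Implicit Defensive.
Import Order.TTheory GRing.Theory Num.Theory.
Local Open Scope ring_scope.

Section Dot.
Variable R : rcfType.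
Variable n : nat.
Implicit Types x y z : 'rV[R]_n.

Lemma dotvE x y : dotv x y = \sum_k x 0 k * y 0 k.
Proof. by rewrite /dotv mxE; apply: eq_bigr => k _; rewrite mxE. Qed.

Lemma dotvC x y : dotv x y = dotv y x.
Proof. by rewrite !dotvE; apply: eq_bigr => k _; rewrite mulrC. Qed.

Lemma dotvDl x y z : dotv (x + y) z = dotv x z + dotv y z.
Proof. by rewrite /dotv mulmxDl mxE. Qed.

Lemma dotvZl a x y : dotv (a *: x) y = a * dotv x y.
Proof. by rewrite /dotv -scalemxAl mxE. Qed.

Lemma dotvNl x y : dotv (- x) y = - dotv x y.
Proof. by rewrite -scaleN1r dotvZl mulN1r. Qed.

Lemma dotvBl x y z : dotv (x - y) z = dotv x z - dotv y z.
Proof. by rewrite dotvDl dotvNl. Qed.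

Lemma dotvDr x y z : dotv z (x + y) = dotv z x + dotv z y.
Proof. by rewrite dotvC dotvDl !(dotvC z). Qed.

Lemma dotvZr a x y : dotv y (a *: x) = a * dotv y x.
Proof. by rewrite dotvC dotvZl dotvC. Qed.

Lemma dotvNr x y : dotv y (- x) = - dotv y x.
Proof. by rewrite dotvC dotvNl dotvC. Qed.

Lemma dotvBr x y z : dotv z (x - y) = dotv z x - dotv z y.
Proof. by rewrite dotvDr dotvNr. Qed.

Lemma dotv0l x : dotv 0 x = 0.
Proof. by rewrite -(scale0r 0) dotvZl mul0r. Qed.

Lemma dotv0r x : dotv x 0 = 0.
Proof. by rewrite dotvC dotv0l. Qed.

Lemma dotv_ge0 x : 0 <= dotv x x.
Proof. by rewrite dotvE sumr_ge0 // => k _; rewrite -expr2 sqr_ge0. Qed.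


Lemma dotv_eq0 x : dotv x x = 0 -> x = 0.
Proof.
rewrite dotvE => H; apply/rowP => k; rewrite mxE.
have H2 : forall i, predT i -> 0 <= x 0 i * x 0 i by move=> i _; rewrite -expr2 sqr_ge0.
have := @psumr_eq0P _ _ _ _ H2 H k isT.
by move/eqP; rewrite mulf_eq0 orbb => /eqP.
Qed.

Lemma dotvMl x y (M : 'M[R]_n) : dotv (x *m M) y = dotv x (y *m M^T).
Proof. by rewrite /dotv trmx_mul trmxK mulmxA. Qed.

Lemma dotvMr x y (M : 'M[R]_n) : dotv x (y *m M) = dotv (x *m M^T) y.
Proof. by rewrite dotvMl trmxK. Qed.

Lemma dotv_suml I (r : seq I) (F : I -> 'rV[R]_n) y :
  dotv (\sum_(i <- r) F i) y = \sum_(i <- r) dotv (F i) y.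
Proof. by rewrite /dotv mulmx_suml summxE. Qed.

Lemma dotv_gt0 x : x != 0 -> 0 < dotv x x.
Proof.
move=> x0; rewrite lt_def dotv_ge0 andbT; apply/eqP => /dotv_eq0 H.
by rewrite H eqxx in x0.
Qed.

Lemma normalize x : x != 0 ->
  exists r, exists2 y, 0 < r /\ dotv y y = 1 & x = r *: y.
Proof.
move=> x0; have hx := dotv_gt0 x0.
set r := Num.sqrt (dotv x x).
have r0 : 0 < r by rewrite sqrtr_gt0.
have r2 : r ^+ 2 = dotv x x by rewrite sqr_sqrtr // ltW.
exists r; exists (r^-1 *: x); last by rewrite scalerA divff ?scale1r // gt_eqF.
split => //; rewrite dotvZl dotvZr -r2 mulrA -expr2 exprVn mulVf //.
by rewrite expf_eq0 /= gt_eqF.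
Qed.

Lemma orth_pm (S : 'M[R]_n) x y : S^T = S -> x *m S = x -> y *m S = - y ->
  dotv x y = 0.
Proof.
move=> Ss Hx Hy.
have : dotv x y = - dotv x y by rewrite -{1}Hx dotvMl Ss Hy dotvNr.
move=> H; lra.
Qed.

Lemma eminus (S : 'M[R]_n) u : S^T = S -> S *m S = 1%:M ->
  (forall w, w *m S = w -> dotv u w = 0) -> u *m S = - u.
Proof.
move=> Ss S2 H; set w := u + u *m S.
have Hw : w *m S = w by rewrite /w mulmxDl -mulmxA S2 mulmx1 addrC.
have : dotv w w = 0.
  rewrite {1}/w dotvDl H // dotvMl Ss Hw H //; lra.
move/dotv_eq0/eqP; rewrite /w addrC addr_eq0 => /eqP //.
Qed.

Lemma mxn2_inj p q (A B : 'M[R]_(p, q)) : A *+ 2 = B *+ 2 -> A = B.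
Proof.
move=> /matrixP H; apply/matrixP => i j; have := H i j; rewrite !mulmxnE.
exact: (@pmulrnI _ 2).
Qed.

Lemma invol_eq (S T : 'M[R]_n) : S^T = S -> S *m S = 1%:M -> T^T = T -> T *m T = 1%:M ->
  (forall x, x *m S = x <-> x *m T = x) -> S = T.
Proof.
move=> Ss S2 Ts T2 E.
have xST x : x *m S = x *m T.
  set u := x + x *m S; set w := x - x *m S.
  have Hu : u *m S = u by rewrite /u mulmxDl -mulmxA S2 mulmx1 addrC.
  have Hw : w *m S = - w by rewrite /w mulmxBl -mulmxA S2 mulmx1 opprB.
  have HuT : u *m T = u by apply/E.
  have HwT : w *m T = - w.
    apply: eminus => // v /E Hv; rewrite dotvC; exact: orth_pm Hv Hw.
  have e1 : x *+ 2 = u + w by rewrite /u /w addrACA subrr addr0 mulr2n.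
  have e2 : (x *m S) *+ 2 = u - w by rewrite /u /w opprB addrC addrA addrNK mulr2n.
  apply: mxn2_inj; rewrite e2 mulr2n -mulmxDl -mulr2n e1 mulmxDl HuT HwT //.
apply/row_matrixP => i; rewrite !rowE; exact: xST.
Qed.

End Dot.

Definition qf (R : rcfType) n (M : 'M[R]_n) (x : 'rV[R]_n) := dotv (x *m M) x.

Section Cliff.
Variable R : rcfType.
Variables n m : nat.
Variable P : 'I_m.+1 -> 'M[R]_n.
Hypothesis HP : is_clifford_basis P.

Definition comb (a : 'I_m.+1 -> R) := \sum_i a i *: P i.

Lemma Psym i : (P i)^T = P i. Proof. by case: HP. Qed.
Lemma Psq i : P i *m P i = 1%:M. Proof. by case: HP. Qed.
Lemma Panti i j : i != j -> P i *m P j = - (P j *m P i). Proof. by case: HP => _ _; apply. Qed.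

Lemma PP i j : P i *m P j + P j *m P i = ((i == j)%:R *+ 2)%:M.
Proof.
have [->|ij] := eqVneq i j; first by rewrite Psq raddfMn mulr2n.
by rewrite Panti // addNr /= raddfMn raddf0 mul0rn.
Qed.

Lemma scalar_mx_sum (F : 'I_m.+1 -> R) : (\sum_i F i)%:M = \sum_i (F i)%:M :> 'M[R]_n.
Proof. by rewrite raddf_sum. Qed.

Lemma comb_tr a : (comb a)^T = comb a.
Proof.
apply/matrixP => i j; rewrite !mxE !summxE; apply: eq_bigr => k _.
by rewrite !mxE -[in RHS]Psym mxE.
Qed.

Lemma anticomm a j : P j *m comb a + comb a *m P j = (a j *+ 2)%:M.
Proof.
rewrite /comb mulmx_sumr mulmx_suml -big_split /=.
rewrite (eq_bigr (fun i => ((a i * (i == j)%:R) *+ 2)%:M)); last first.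
  move=> i _; rewrite -scalemxAr -scalemxAl -scalerDr addrC PP -scalemx1 scalerA.
  by rewrite scalemx1 mulrnAr.
rewrite -scalar_mx_sum sumrMnl (bigD1 j) //= eqxx mulr1 big1 ?addr0 //.
by move=> i /negbTE ->; rewrite mulr0.
Qed.

Lemma comb_sq a : comb a *m comb a = (\sum_i a i ^+ 2)%:M.
Proof.
apply/matrixP => r c; apply: (@pmulrnI _ 2) => //=.
rewrite -!mulmxnE mulr2n.
have -> : (comb a *m comb a) + (comb a *m comb a) =
   \sum_i a i *: (P i *m comb a + comb a *m P i).
  have E1 : comb a *m comb a = \sum_i a i *: (P i *m comb a).
    by rewrite {1}/comb mulmx_suml; apply: eq_bigr => i _; rewrite scalemxAl.
  have E2 : comb a *m comb a = \sum_i a i *: (comb a *m P i).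
    by rewrite {2}/comb mulmx_sumr; apply: eq_bigr => i _; rewrite scalemxAr.
  by rewrite {1}E1 E2 -big_split /=; apply: eq_bigr => i _; rewrite scalerDr.
rewrite (eq_bigr (fun i => ((a i ^+ 2) *+ 2)%:M)); last first.
  by move=> i _; rewrite anticomm -mul_scalar_mx -scalar_mxM mulrnAr expr2.
by rewrite -scalar_mx_sum sumrMnl raddfMn.
Qed.

Lemma comb_sub a b : comb a - comb b = comb (fun i => a i - b i).
Proof.
by rewrite /comb -sumrB; apply: eq_bigr => i _; rewrite scalerBl.
Qed.

Lemma qf_comb a x : qf (comb a) x = \sum_i a i * qf (P i) x.
Proof.
rewrite /qf /comb mulmx_sumr dotv_suml; apply: eq_bigr => i _.
by rewrite -scalemxAr dotvZl.
Qed.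

Lemma cliff_pi_comb x : cliff_pi P x = comb (fun i => qf (P i) x).
Proof. by []. Qed.

Lemma sumsq_eq0 (d : 'I_m.+1 -> R) : \sum_i d i ^+ 2 = 0 -> forall i, d i = 0.
Proof.
move=> H i; have H2 : forall i, predT i -> 0 <= d i ^+ 2 by move=> k _; rewrite sqr_ge0.
by have /eqP := @psumr_eq0P _ _ _ _ H2 H i isT; rewrite sqrf_eq0 => /eqP.
Qed.

Lemma comb_inj (n0 : (0 < n)%N) a b : comb a = comb b -> forall i, a i = b i.
Proof.
move=> /eqP; rewrite -subr_eq0 comb_sub => /eqP H i.
have : comb (fun i => a i - b i) *m comb (fun i => a i - b i) = 0 by rewrite H mul0mx.
rewrite comb_sq => /matrixP /(_ (Ordinal n0) (Ordinal n0)); rewrite !mxE eqxx mulr1n.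
by move/sumsq_eq0/(_ i)/eqP; rewrite subr_eq0 => /eqP.
Qed.

Lemma cliff_pi_eq (n0 : (0 < n)%N) x y :
  cliff_pi P x = cliff_pi P y <-> forall i, qf (P i) x = qf (P i) y.
Proof.
split; first exact: comb_inj.
by move=> H; rewrite /cliff_pi; apply: eq_bigr => i _; have := H i; rewrite /qf => ->.
Qed.

Lemma qfZ (M : 'M[R]_n) r x : qf M (r *: x) = r ^+ 2 * qf M x.
Proof. by rewrite /qf -scalemxAl dotvZl dotvZr mulrA expr2. Qed.

Lemma qfD (M : 'M[R]_n) x w : M^T = M ->
  qf M (x + w) = qf M x + qf M w + 2 * dotv (x *m M) w.
Proof.
move=> Ms; rewrite /qf mulmxDl !dotvDl !dotvDr.
have -> : dotv (w *m M) x = dotv (x *m M) w by rewrite dotvMl Ms dotvC.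
by rewrite mulr2n mulrDl mul1r; ring.
Qed.

Lemma comb_norm a y : dotv (y *m comb a) (y *m comb a) = (\sum_i a i ^+ 2) * dotv y y.
Proof. by rewrite dotvMl comb_tr -mulmxA comb_sq mul_mx_scalar dotvZr. Qed.

Lemma eig_self i (eps : R) x : x *m P i = eps *: x -> qf (P i) x = eps * dotv x x.
Proof. by move=> H; rewrite /qf H dotvZl. Qed.

Lemma eig_anti i j (eps : R) x : eps != 0 -> x *m P i = eps *: x -> i != j ->
  qf (P j) x = 0.
Proof.
move=> e0 H ij.
have E1 : eps * qf (P j) x = dotv (x *m P j) (x *m P i) by rewrite H dotvZr.
have E2 : dotv (x *m P j) (x *m P i) = - (eps * qf (P j) x).
  rewrite dotvMr Psym -mulmxA (@Panti j i); last by rewrite eq_sym.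
  by rewrite mulmxN mulmxA H -scalemxAl dotvNl dotvZl.
have : eps * qf (P j) x = 0 by lra.
by move/eqP; rewrite mulf_eq0 (negbTE e0) /= => /eqP.
Qed.

Lemma eig_fiber i (eps : R) x y : eps != 0 -> x *m P i = eps *: x -> y *m P i = eps *: y ->
  dotv x x = 1 -> dotv y y = 1 -> forall i0, qf (P i0) x = qf (P i0) y.
Proof.
move=> e0 Hx Hy nx ny i0; have [<-|ij] := eqVneq i i0.
  by rewrite (eig_self Hx) (eig_self Hy) nx ny.
by rewrite (eig_anti e0 Hx ij) (eig_anti e0 Hy ij).
Qed.

Lemma qf_bound y : dotv y y = 1 -> \sum_i qf (P i) y ^+ 2 <= 1.
Proof.
move=> ny; set d := fun i => qf (P i) y; set s := \sum_i _.
have E1 : dotv (y *m comb d) y = s.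
  by rewrite -/(qf _ _) qf_comb; apply: eq_bigr => i _; rewrite expr2.
have E2 := comb_norm d y; rewrite ny mulr1 -/s in E2.
have := dotv_ge0 (y *m comb d - s *: y).
rewrite !dotvBl !dotvBr !dotvZl !dotvZr E1 E2 ny dotvC E1 => H.
have s0 : 0 <= s by rewrite /s sumr_ge0 // => i _; rewrite sqr_ge0.
nra.
Qed.

Lemma dotPP a b x : dotv (x *m P a) (x *m P b) = (a == b)%:R * dotv x x.
Proof.
rewrite dotvMr Psym -mulmxA; have [<-|ab] := eqVneq a b.
  by rewrite Psq mulmx1 mul1r.
set t := dotv _ _.
have : t = - t.
  rewrite {1}/t dotvMl trmx_mul !Psym dotvC (Panti (i:=b) (j:=a)) ?mulmxN ?dotvNl //.
  by rewrite eq_sym.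
by move=> H; rewrite mul0r; lra.
Qed.

Lemma PjP a j : P a *m P j *m P a = ((a == j)%:R *+ 2) *: P a - P j.
Proof.
have E : P a *m P j = ((a == j)%:R *+ 2)%:M - P j *m P a by rewrite -PP addrK.
by rewrite E mulmxBl mul_scalar_mx -mulmxA Psq mulmx1.
Qed.

Lemma PcP a j : comb a *m P j *m comb a = (a j *+ 2) *: comb a - (\sum_i a i ^+ 2) *: P j.
Proof.
have E : comb a *m P j = (a j *+ 2)%:M - P j *m comb a by rewrite -(anticomm a j) (addrC (P j *m comb a)) addrK.
by rewrite E mulmxBl mul_scalar_mx -mulmxA comb_sq mul_mx_scalar.
Qed.

Lemma comb_unit_sq a : comb a *m comb a = 1%:M -> \sum_i a i ^+ 2 = 1.
Abort.

End Cliff.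

Section Core.
Variable R : rcfType.
Variables l m k : nat.
Variable P : 'I_m.+1 -> 'M[R]_(l.*2).
Variable Q : 'I_k.+1 -> 'M[R]_(l.*2).
Hypothesis HP : is_clifford_basis P.
Hypothesis HQ : is_clifford_basis Q.
Hypothesis m0 : (0 < m)%N.
Hypothesis l0 : (0 < l)%N.
Hypothesis hk : (k.+1 < l)%N \/ l = k.
Hypothesis FE : forall x y, dotv x x = 1 -> dotv y y = 1 ->
  (forall i, qf (P i) x = qf (P i) y) <-> (forall j, qf (Q j) x = qf (Q j) y).

Variable i : 'I_m.+1.
Local Notation Pi := (P i).
Local Notation n := (l.*2).

Lemma ex_i' : exists i' : 'I_m.+1, i' != i.
Proof.
have [->|i0] := eqVneq i ord0; last by exists ord0; rewrite eq_sym.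
by exists (inord 1); rewrite -val_eqE /= inordK.
Qed.

Lemma n0 : (0 < n)%N.
Proof. by rewrite double_gt0. Qed.

Lemma ex_x0 : exists x0 : 'rV[R]_n, dotv x0 x0 = 1 /\ x0 *m Pi = x0.
Proof.
suff [u u0 Hu] : exists2 u : 'rV[R]_n, u != 0 & u *m Pi = u.
  have [r [y [r0 ny] ey]] := normalize u0; exists y; split => //.
  apply: (@scalerI _ _ r); first by rewrite gt_eqF.
  by rewrite scalemxAl -ey.
set e : 'rV[R]_n := delta_mx 0 (Ordinal n0).
have e0 : e != 0.
  apply/eqP => /matrixP /(_ 0 (Ordinal n0)); rewrite !mxE !eqxx /=.
  by move/eqP; rewrite oner_eq0.
have [u0|] := eqVneq (e + e *m Pi) 0; last first.
  move=> u0; exists (e + e *m Pi) => //.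
  by rewrite mulmxDl -mulmxA (Psq HP) mulmx1 addrC.
have eN : e *m Pi = - e by apply/eqP; rewrite -addr_eq0 addrC u0.
have [i' ii'] := ex_i'.
exists (e *m P i').
  apply/eqP => H; move: e0; rewrite -[e]mulmx1 -(Psq HP i') mulmxA H mul0mx.
  by rewrite eqxx.
by rewrite -mulmxA (Panti HP ii') mulmxN mulmxA eN mulNmx opprK.
Qed.

Lemma B2 y : dotv y y = 1 -> qf Pi y = 1 -> y *m Pi = y.
Proof.
move=> ny qy; apply/eqP; rewrite -subr_eq0; apply/eqP/dotv_eq0.
rewrite !dotvBl !dotvBr.
have -> : dotv (y *m Pi) (y *m Pi) = 1 by rewrite dotvMr (Psym HP) -mulmxA (Psq HP) mulmx1.
rewrite [dotv y (y *m Pi)]dotvC -/(qf _ _) qy ny; lra.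
Qed.

Variable x0 : 'rV[R]_n.
Hypothesis hx0 : dotv x0 x0 = 1.
Hypothesis Vx0 : x0 *m Pi = x0.

Definition c j := qf (Q j) x0.
Definition s := \sum_j c j ^+ 2.
Definition Qc := comb Q c.

Lemma x0e : x0 *m Pi = 1 *: x0. Proof. by rewrite scale1r. Qed.

Lemma qPi_x0 : qf Pi x0 = 1.
Proof. by rewrite (eig_self x0e) hx0 mulr1. Qed.

Lemma B3 y : dotv y y = 1 -> y *m Pi = y -> forall j, qf (Q j) y = c j.
Proof.
move=> ny Vy; apply/(FE ny hx0).
have ye : y *m Pi = 1 *: y by rewrite scale1r.
exact: (eig_fiber HP (oner_neq0 R) ye x0e).
Qed.

Lemma B4 y : y != 0 -> (forall j, qf (Q j) y = dotv y y * c j) -> y *m Pi = y.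
Proof.
move=> y0 Hq; have [r [z [r0 nz] ey]] := normalize y0.
have r2 : r ^+ 2 != 0 by rewrite expf_eq0 gt_eqF.
have Hz : forall j, qf (Q j) z = qf (Q j) x0.
  move=> j; apply: (mulfI r2); have := Hq j.
  by rewrite ey qfZ dotvZl dotvZr nz mulr1 => ->; rewrite /c; ring.
have HPz := (FE nz hx0).2 Hz.
have Vz : z *m Pi = z by apply: B2 => //; rewrite HPz qPi_x0.
by rewrite ey -scalemxAl Vz.
Qed.

Lemma B5 x : x *m Pi = x -> forall j, qf (Q j) x = dotv x x * c j.
Proof.
move=> Vx j; have [->|x0'] := eqVneq x 0.
  by rewrite /qf mul0mx !dotv0l mul0r.
have [r [z [r0 nz] ey]] := normalize x0'.
have Vz : z *m Pi = z.
  apply: (@scalerI _ _ r); first by rewrite gt_eqF.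
  by rewrite scalemxAl -ey.
rewrite ey qfZ dotvZl dotvZr nz (B3 nz Vz); ring.
Qed.

Lemma B6 x w j : x *m Pi = x -> w *m Pi = w -> dotv (x *m Q j) w = dotv x w * c j.
Proof.
move=> Vx Vw.
have Vxw : (x + w) *m Pi = x + w by rewrite mulmxDl Vx Vw.
have := B5 Vxw j; rewrite (qfD _ _ (Psym HQ j)) (B5 Vx) (B5 Vw).
rewrite !dotvDl !dotvDr [dotv w x]dotvC => H.
have : 2 * dotv (x *m Q j) w = 2 * (dotv x w * c j) by lra.
by move/(mulfI (x:=2)); apply; rewrite pnatr_eq0.
Qed.

Lemma B6c x w : x *m Pi = x -> w *m Pi = w -> dotv (x *m Qc) w = dotv x w * s.
Proof.
move=> Vx Vw; rewrite /Qc /comb mulmx_sumr dotv_suml /s mulr_sumr.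
apply: eq_bigr => j _; rewrite -scalemxAr dotvZl (B6 _ Vx Vw); ring.
Qed.

Lemma s_ge0 : 0 <= s.
Proof. by rewrite /s sumr_ge0 // => j _; rewrite sqr_ge0. Qed.

Lemma s_le1 : s <= 1.
Proof. exact: (qf_bound HQ hx0). Qed.

Lemma qQc_x0 : dotv (x0 *m Qc) x0 = s.
Proof. by rewrite -/(qf _ _) qf_comb /s; apply: eq_bigr => j _; rewrite expr2. Qed.

Lemma sum_sqB (d e : 'I_k.+1 -> R) :
  \sum_j (d j - e j) ^+ 2 = \sum_j d j ^+ 2 - (\sum_j e j * d j) *+ 2 + \sum_j e j ^+ 2.
Proof.
rewrite -sumrMnl -sumrB -big_split /=; apply: eq_bigr => j _; ring.
Qed.

Lemma case1 : s = 1 -> Pi = Qc.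
Proof.
move=> s1; apply: invol_eq.
- exact: (Psym HP).
- exact: (Psq HP).
- exact: (comb_tr HQ).
- by rewrite (comb_sq HQ) -/s s1.
-
move=> x; split => Hx.
  apply/eqP; rewrite -subr_eq0; apply/eqP/dotv_eq0.
  rewrite !dotvBl !dotvBr (comb_norm HQ) -/s (B6c Hx Hx) [dotv x (x *m Qc)]dotvC (B6c Hx Hx) s1.
  lra.
have [->|y0] := eqVneq x 0; first by rewrite mul0mx.
apply: B4 => //.
have [r [z [r0 nz] ey]] := normalize y0.
have Vz : z *m Qc = z.
  apply: (@scalerI _ _ r); first by rewrite gt_eqF.
  by rewrite scalemxAl -ey.
set d := fun j => qf (Q j) z.
have hd := qf_bound HQ nz; rewrite -/d in hd.
have hcd : \sum_j c j * d j = 1 by rewrite -qf_comb -/Qc /qf Vz nz.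
have : \sum_j (d j - c j) ^+ 2 = 0.
  apply/eqP; rewrite eq_le sumr_ge0 ?andbT; last by move=> j _; rewrite sqr_ge0.
  rewrite sum_sqB hcd -/s s1; lra.
move/(sumsq_eq0) => Hdc j.
have : d j = c j by apply/eqP; rewrite -subr_eq0; apply/eqP.
rewrite /d => dc; rewrite ey qfZ dc dotvZl dotvZr nz; ring.
Qed.

Lemma case2 : s != 0 -> s != 1 -> False.
Proof.
move=> s0 s1; set y := x0 *m Qc.
have yq : forall j, qf (Q j) y = s * c j.
  move=> j; rewrite /qf /y /Qc dotvMr (comb_tr HQ) -!mulmxA (mulmxA (comb Q c)) (PcP HQ).
  rewrite mulmxBr -!scalemxAr dotvBl !dotvZl.
  have := qQc_x0; rewrite /Qc => ->.
  rewrite -/(qf (Q j) x0) -/(c j) -/s mulr2n; ring.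
have yy : dotv y y = s by rewrite /y (comb_norm HQ) hx0 mulr1.
have y0 : y != 0 by apply/eqP => H; move: s0; rewrite -yy H dotv0l eqxx.
have Vy : y *m Pi = y by apply: B4 => // j; rewrite yq yy.
set w := y - s *: x0.
have Vw : w *m Pi = w by rewrite /w mulmxBl -scalemxAl Vy Vx0.
have := B6c Vx0 Vw; rewrite -/y /w !dotvBr !dotvZr yy hx0 [dotv y x0]dotvC.
rewrite [dotv x0 y]dotvC /y qQc_x0 => H.
have : s * (1 - s) = 0 by lra.
move/eqP; rewrite mulf_eq0 (negbTE s0) /= subr_eq0 eq_sym (negbTE s1) //.
Qed.

Definition Wm : 'M[R]_n := 1%:M - Pi.
Definition Wp : 'M[R]_n := 1%:M + Pi.

Lemma subWm p (A : 'M[R]_(p, n)) : (A <= Wm)%MS -> A *m Pi = - A.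
Proof.
move/submxP => [D ->]; rewrite -mulmxA /Wm mulmxBl mul1mx (Psq HP).
by rewrite -opprB mulmxN.
Qed.

Lemma subWp p (A : 'M[R]_(p, n)) : (A <= Wp)%MS -> A *m Pi = A.
Proof.
move/submxP => [D ->]; rewrite -mulmxA /Wp mulmxDl mul1mx (Psq HP).
by rewrite addrC.
Qed.

Lemma inWm (u : 'rV[R]_n) : u *m Pi = - u -> (u <= Wm)%MS.
Proof.
move=> Hu; have -> : u = ((2 : R)^-1 *: u) *m Wm.
  rewrite -scalemxAl /Wm mulmxBr mulmx1 Hu opprK -mulr2n -scaler_nat scalerA.
  by rewrite mulVf ?scale1r // pnatr_eq0.
exact: submxMl.
Qed.

Lemma unitP j : P j \in unitmx.
Proof. by case: (mulmx1_unit (Psq HP j)). Qed.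

Lemma rankWm : \rank Wm = l.
Proof.
have [i' ii'] := ex_i'.
have E1 : Wp *m P i' = P i' *m Wm.
  by rewrite /Wp /Wm mulmxDl mulmxBr mul1mx mulmx1 (Panti HP (i:=i) (j:=i')) 1?eq_sym // opprK.
have E2 : Wm *m P i' = P i' *m Wp.
  by rewrite /Wp /Wm mulmxBl mulmxDr mul1mx mulmx1 (Panti HP (i:=i) (j:=i')) 1?eq_sym // opprK.
have fr : row_free (P i') by rewrite row_free_unit unitP.
have r1 : \rank Wp = \rank Wm.
  apply/eqP; rewrite eqn_leq; apply/andP; split.
    by rewrite -(mxrankMfree _ fr) E1 mxrankM_maxr.
  by rewrite -(mxrankMfree _ fr) E2 mxrankM_maxr.
have cap0 : (Wp :&: Wm)%MS = 0.
  have h1 := subWp (capmxSl Wp Wm); have h2 := subWm (capmxSr Wp Wm).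
  apply: mxn2_inj; rewrite mul0rn mulr2n.
  by rewrite -{2}h1 h2 subrr.
have two : (2%:M : 'M[R]_n) \in unitmx.
  have : (2%:M : 'M[R]_n) *m (2^-1)%:M = 1%:M.
    by rewrite -scalar_mxM mulfV // pnatr_eq0.
  by case/mulmx1_unit.
have r2 : \rank (Wp + Wm)%MS = n.
  apply/eqP; rewrite eqn_leq rank_leq_col /=.
  have : ((Wp + Wm)%R <= (Wp + Wm))%MS by apply: addmx_sub_adds.
  move/mxrankS; have -> : (Wp + Wm)%R = 2%:M.
    by rewrite /Wp /Wm addrACA subrr addr0 -mulr2n raddfMn.
  by rewrite mxrank_unit.
have := mxrank_sum_cap Wp Wm; rewrite cap0 mxrank0 addn0 r2 r1 addnn.
by move/double_inj.
Qed.

Definition Xq : 'M[R]_(k.+1, n) := \matrix_(a, b) (x0 *m Q a) 0 b.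

Lemma rowXq a : row a Xq = x0 *m Q a.
Proof. by apply/rowP => b; rewrite !mxE. Qed.

Lemma case3 : s = 0 -> False.
Proof.
move=> s0.
have c0 : forall j, c j = 0 by apply: sumsq_eq0.
have xQm : forall a, x0 *m Q a *m Pi = - (x0 *m Q a).
  move=> a; apply: (eminus (Psym HP i) (Psq HP i)).
  by move=> w Vw; rewrite (B6 _ Vx0 Vw) c0 mulr0.
have XW : (Xq <= Wm)%MS by apply/row_subP => a; rewrite rowXq inWm.
have XX : Xq *m Xq^T = 1%:M.
  apply/matrixP => a b; rewrite !mxE.
  have := dotPP HQ a b x0; rewrite hx0 mulr1 dotvE => <-.
  by apply: eq_bigr => t _; rewrite !mxE.
have rX : \rank Xq = k.+1.
  apply/eqP; rewrite eqn_leq rank_leq_row /=.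
  by rewrite -{1}(mxrank1 R k.+1) -XX mxrankM_maxl.
have rXW := mxrankS XW; rewrite rX rankWm in rXW.
case: hk => [hk'|lk]; last by move: rXW; rewrite lk ltnn.
have nQ0 : dotv (x0 *m Q 0) (x0 *m Q 0) = 1 by rewrite (dotPP HQ) eqxx mul1r hx0.
have qm : forall z, z *m Pi = - z -> forall j, qf (Q j) z = 0.
  move=> z Hz j; have [->|z0] := eqVneq z 0.
    by rewrite /qf mul0mx dotv0l.
  have [r [z' [r0 nz'] ez]] := normalize z0.
  have Vz' : z' *m Pi = (-1) *: z'.
    apply: (@scalerI _ _ r); first by rewrite gt_eqF.
    by rewrite scalemxAl -ez Hz ez scaleN1r scalerN.
  have Vq : x0 *m Q 0 *m Pi = (-1) *: (x0 *m Q 0) by rewrite xQm scaleN1r.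
  have m1 : (-1 : R) != 0 by rewrite oppr_eq0 oner_eq0.
  have hf := eig_fiber HP m1 Vz' Vq nz' nQ0.
  have hq := (FE nz' nQ0).1 hf j.
  rewrite ez qfZ hq /qf dotvMr (Psym HQ) -!mulmxA (mulmxA (Q 0)) (PjP HQ).
  rewrite mulmxBr -scalemxAr dotvBl dotvZl -/(qf (Q 0) x0) -/(qf (Q j) x0).
  by rewrite -/(c 0) -/(c j) !c0 mulr0 subrr mulr0.
set Km := kermx Xq^T.
have rK : \rank Km = (n - k.+1)%N by rewrite mxrank_ker mxrank_tr rX.
have rC : (0 < \rank (Wm :&: Km))%N.
  have := mxrank_sum_cap Wm Km; rewrite rK rankWm.
  have := rank_leq_col (Wm + Km)%MS; lia.
have [z [zW zK z0]] : exists z : 'rV[R]_n, [/\ (z <= Wm)%MS, (z <= Km)%MS & z != 0].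
  move: rC; rewrite lt0n mxrank_eq0 => C0.
  have [r rz] : exists r, row r (Wm :&: Km)%MS != 0.
    case: (boolP [exists r, row r (Wm :&: Km)%MS != 0]) => [/existsP //|].
    rewrite negb_exists => /forallP H; move: C0.
    have -> : (Wm :&: Km)%MS = 0.
      by apply/row_matrixP => r; rewrite row0; apply/eqP; rewrite -[_ == _]negbK H.
    by rewrite eqxx.
  exists (row r (Wm :&: Km)%MS); split => //.
    exact: submx_trans (row_sub _ _) (capmxSl _ _).
  exact: submx_trans (row_sub _ _) (capmxSr _ _).
have zX : forall j, dotv (x0 *m Q j) z = 0.
  move=> j; move/sub_kermxP: zK => /matrixP /(_ 0 j); rewrite !mxE => <-.
  by rewrite dotvC dotvE; apply: eq_bigr => t _; rewrite !mxE.
have zm : z *m Pi = - z := subWm zW.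
have x0z : dotv x0 z = 0 by apply: (orth_pm (Psym HP i)).
set y := x0 + z.
have yq : forall j, qf (Q j) y = dotv y y * c j.
  move=> j; rewrite (qfD _ _ (Psym HQ j)) (qm _ zm) zX -/(c j) c0; ring.
have y0 : y != 0.
  apply/eqP => H; have : dotv y y = 0 by rewrite H dotv0l.
  rewrite /y !dotvDl !dotvDr hx0 x0z dotvC x0z.
  have := dotv_ge0 z; lra.
have Vy := B4 y0 yq.
have Vz : z *m Pi = z by move: Vy; rewrite /y mulmxDl Vx0 => /addrI.
have : dotv z z = 0 by apply: (orth_pm (Psym HP i) Vz zm).
by move/dotv_eq0/eqP; rewrite (negbTE z0).
Qed.

End Core.

Lemma core (R : rcfType) l m k (P : 'I_m.+1 -> 'M[R]_(l.*2)) (Q : 'I_k.+1 -> 'M[R]_(l.*2)) :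
  is_clifford_basis P -> is_clifford_basis Q -> (0 < m)%N -> (0 < l)%N ->
  ((k.+1 < l)%N \/ l = k) ->
  (forall x y, dotv x x = 1 -> dotv y y = 1 ->
  (forall i, qf (P i) x = qf (P i) y) <-> (forall j, qf (Q j) x = qf (Q j) y)) ->
  forall i, exists c, P i = comb Q c.
Proof.
move=> HP HQ m0 l0 hk FE i.
have [x0 [hx0 Vx0]] := ex_x0 HP m0 l0 i.
have [s1|s1] := eqVneq (s Q x0) 1.
  by exists (c Q x0); rewrite (case1 HP HQ FE hx0 Vx0 s1).
have [s0|s0] := eqVneq (s Q x0) 0.
  by case: (case3 HP HQ m0 l0 hk FE hx0 Vx0 s0).
by case: (case2 HP HQ FE hx0 Vx0 s0 s1).
Qed.

Section Iso.
Variable R : rcfType.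
Variables n n' : nat.
Variable f : 'rV[R]_n -> 'rV[R]_n'.
Hypothesis Hf : sphere_isometry f.

Lemma iso_sph x : on_sphere x -> on_sphere (f x).
Proof. by case: Hf => H _ _; apply: H. Qed.

Lemma iso_dot x y : on_sphere x -> on_sphere y -> dotv (f x) (f y) = dotv x y.
Proof.
move=> hx hy; case: Hf => H1 H2 _; have := H2 _ _ hx hy.
have := H1 _ hx; have := H1 _ hy; rewrite /on_sphere.
rewrite !dotvBl !dotvBr [dotv (f y) (f x)]dotvC [dotv y x]dotvC.
move: hx hy; rewrite /on_sphere; lra.
Qed.

Lemma iso_inj x y : on_sphere x -> on_sphere y -> f x = f y -> x = y.
Proof.
move=> hx hy fxy; apply/eqP; rewrite -subr_eq0; apply/eqP/dotv_eq0.
case: Hf => _ H2 _; rewrite -H2 // fxy subrr dotv0l //.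
Qed.

Lemma dot_delta (p : nat) (a : 'I_p) (w : 'rV[R]_p) : dotv (delta_mx 0 a) w = w 0 a.
Proof. by rewrite /dotv -rowE !mxE. Qed.

Lemma sph_delta (p : nat) (a : 'I_p) : on_sphere (delta_mx 0 a : 'rV[R]_p).
Proof. by rewrite /on_sphere dot_delta mxE !eqxx. Qed.

Definition Am : 'M[R]_(n, n') := \matrix_(a, b) (f (delta_mx 0 a)) 0 b.

Lemma rowAm a : row a Am = f (delta_mx 0 a).
Proof. by apply/rowP => b; rewrite !mxE. Qed.

Lemma fA x : on_sphere x -> f x = x *m Am.
Proof.
move=> hx; apply/eqP; rewrite -subr_eq0; apply/eqP/rowP => b.
case: Hf => _ _ H3; have [w hw fw] := H3 _ (sph_delta b).
rewrite [RHS]mxE -(dot_delta b) dotvC -fw dotvBl iso_dot // mulmx_sum_row dotv_suml.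
rewrite [dotv x w]dotvE [X in _ - X](eq_bigr (fun a => x 0 a * w 0 a)) ?subrr //.
move=> a _; rewrite dotvZl rowAm iso_dot //; last exact: sph_delta.
exact: (congr1 (fun t => x 0 a * t) (dot_delta a w)).
Qed.

Lemma AAt : Am *m Am^T = 1%:M.
Proof.
apply/matrixP => a b; rewrite !mxE.
have := iso_dot (sph_delta a) (sph_delta b); rewrite dot_delta mxE eqxx /= => H.
rewrite -[X in _ = X]mulr1n -H dotvE; apply: eq_bigr => t _; rewrite !mxE //.
Qed.

Lemma iso_dim : n = n'.
Proof.
apply/eqP; rewrite eqn_leq; apply/andP; split.
  by rewrite -{1}(mxrank1 R n) -AAt (leq_trans (mxrankM_maxl _ _)) // rank_leq_col.
rewrite -{1}(mxrank1 R n') (leq_trans _ (rank_leq_row Am)) // mxrankS //.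
apply/row_subP => b; case: Hf => _ _ H3; have [w hw fw] := H3 _ (sph_delta b).
by rewrite rowE mulmx1 -fw fA // submxMl.
Qed.

End Iso.

Lemma row_cliff (R : rcfType) n m (X : 'I_m.+1 -> 'M[R]_n) i :
  row i (cliff_space X) = mxvec (X i).
Proof. by apply/rowP => b; rewrite !mxE. Qed.

Lemma comb_in_space (R : rcfType) n m (X : 'I_m.+1 -> 'M[R]_n) d :
  (mxvec (comb X d) <= cliff_space X)%MS.
Proof.
rewrite /comb linear_sum; apply: summx_sub => i _; rewrite linearZ.
by apply: scalemx_sub; have := row_sub i (cliff_space X); rewrite row_cliff.
Qed.

Lemma conj_comb (R : rcfType) n m (X : 'I_m.+1 -> 'M[R]_n) (B C : 'M[R]_n) d :
  B *m comb X d *m C = comb (fun i => B *m X i *m C) d.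
Proof.
rewrite /comb mulmx_sumr mulmx_suml; apply: eq_bigr => i _.
by rewrite -scalemxAr -scalemxAl.
Qed.

Unset Implicit Arguments.

Theorem proposition4p2 (R : rcfType) (l m l' m' : nat)
  (P : 'I_m.+1 -> 'M[R]_(l.*2)) (P' : 'I_m'.+1 -> 'M[R]_(l'.*2)) :
  (0 < m)%N -> (0 < m')%N ->
  is_clifford_basis P -> is_clifford_basis P' ->
  ((m.+1 < l)%N \/ (l = m /\ (2 <= m)%N)) ->
  ((m'.+1 < l')%N \/ (l' = m' /\ (2 <= m')%N)) ->
  ~ geom_equiv P P' ->
  ~ (exists f : 'rV[R]_(l.*2) -> 'rV[R]_(l'.*2),
       sphere_isometry f /\ maps_leaves_onto P P' f).
Proof.
move=> m0 m0' HP HP' hl hl' nge [f [Hf Hl]].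
have nn := iso_dim Hf.
have ll : l' = l by apply/double_inj; rewrite -nn.
subst l'.
apply: nge.
set A := Am f.
have AAt' : A *m A^T = 1%:M := AAt Hf.
have AtA : A^T *m A = 1%:M := mulmx1C AAt'.
set Q := fun j => A *m P' j *m A^T.
have HQ : is_clifford_basis Q.
  split.
  - by move=> j; rewrite /Q !trmx_mul trmxK (Psym HP') mulmxA.
  - by move=> j; rewrite /Q -!mulmxA (mulmxA A^T) AtA mul1mx (mulmxA (P' j)) (Psq HP') mul1mx.
  - move=> a b ab; rewrite /Q -!mulmxA (mulmxA A^T) AtA mul1mx (mulmxA (P' a)) (Panti HP' ab).
    by rewrite mulNmx mulmxN -!mulmxA (mulmxA A^T) AtA mul1mx !mulmxA.
have qQ : forall j x, qf (Q j) x = qf (P' j) (x *m A).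
  by move=> j x; rewrite /qf /Q !mulmxA dotvMl trmxK.
have l0 : (0 < l)%N by case: hl => [|[->]]; lia.
have n0 : (0 < l.*2)%N by rewrite double_gt0.
have FE : forall x y, dotv x x = 1 -> dotv y y = 1 ->
    (forall i, qf (P i) x = qf (P i) y) <-> (forall j, qf (Q j) x = qf (Q j) y).
  move=> x y hx hy.
  have fx := fA Hf hx; have fy := fA Hf hy.
  split => H.
  - have Hpi : cliff_pi P y = cliff_pi P x by apply/(cliff_pi_eq HP n0) => i; rewrite H.
    have [_ hfy] := (Hl x hx (f y)).2 (ex_intro2 _ _ y (conj hy Hpi) erefl).
    move: hfy => /(cliff_pi_eq HP' n0) hfy j; by rewrite !qQ -fx -fy hfy.
  - have hfy : cliff_pi P' (f y) = cliff_pi P' (f x).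
      by apply/(cliff_pi_eq HP' n0) => j; rewrite fx fy -!qQ H.
    have [y' [hy' Hpi] fy'] := (Hl x hx (f y)).1 (conj (iso_sph Hf hy) hfy).
    have ey' := iso_inj Hf hy' hy fy'; subst y'.
    by move/(cliff_pi_eq HP n0): Hpi => Hpi i; rewrite Hpi.
have hk1 : (m'.+1 < l)%N \/ l = m' by case: hl' => [|[]]; [left|right].
have hk2 : (m.+1 < l)%N \/ l = m by case: hl => [|[]]; [left|right].
have c1 := core HP HQ m0 l0 hk1 FE.
have FE' : forall x y, dotv x x = 1 -> dotv y y = 1 ->
    (forall j, qf (Q j) x = qf (Q j) y) <-> (forall i, qf (P i) x = qf (P i) y).
  by move=> x y hx hy; apply: iff_sym; apply: FE.
have c2 := core HQ HP m0' l0 hk2 FE'.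
have Au : A \in unitmx by case: (mulmx1_unit AAt').
have iA : invmx A = A^T.
  by rewrite -[invmx A]mulmx1 -AAt' mulmxA mulVmx // mul1mx.
exists erefl; exists A => //.
set X2 := fun i => _.
have X2E : forall d, comb X2 d = A^T *m comb P d *m A.
  move=> d; rewrite conj_comb; apply: eq_bigr => i _.
  by rewrite /X2 castmx_id iA.
apply/andP; split; apply/row_subP => j; rewrite row_cliff.
- have [d Hd] := c2 j.
  have -> : P' j = comb X2 d.
    by rewrite X2E -Hd /Q -!mulmxA AtA mulmx1 !mulmxA AtA mul1mx.
  exact: comb_in_space.
- have [c Hc] := c1 j.
  have -> : X2 j = comb P' c.
    rewrite /X2 castmx_id iA Hc /Q conj_comb /comb; apply: eq_bigr => i _.
    by rewrite -!mulmxA AtA mulmx1 !mulmxA AtA mul1mx.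
  exact: comb_in_space.
Qed.
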